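(* The space $\ell_1$ fails the $\mathbf{L}_{p,p}$-nu.
   Context: For a Banach space $X$: $\Pi(X)=\{(x,x^* )\in S_X\times S_{X^*}: x^*(x)=1\}$; for $T\in\mathcal{L}(X)$ (bounded linear operators on $X$), $v(T)=\sup\{|x^*(Tx)|:(x,x^* )\in\Pi(X)\}$. $X$ has the $\mathbf{L}_{p,p}$-nu if for every $\varepsilon>0$ and $(x,x^* )\in\Pi(X)$ there is $\eta(\varepsilon,(x,x^* ))>0$ such that whenever $T\in\mathcal{L}(X)$ with $v(T)=1$ satisfies $|x^*(Tx)|>1-\eta(\varepsilon,(x,x^* ))$, there is $S\in\mathcal{L}(X)$ with $v(S)=1$, $|x^*(Sx)|=1$ and $\|S-T\|<\varepsilon$. *)

(* Defs.v *)
From Stdlib Require Import Reals.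
From Coquelicot Require Import Coquelicot.
Open Scope R_scope.

Definition seqR := nat -> R.

Definition in_l1 (x : seqR) : Prop := ex_series (fun n => Rabs (x n)).
Definition norm1 (x : seqR) : R := Series (fun n => Rabs (x n)).

Definition seq_add (x y : seqR) : seqR := fun n => x n + y n.
Definition seq_scal (a : R) (x : seqR) : seqR := fun n => a * x n.

(** Bounded linear functionals on ell_1 (elements of the dual X^* ).
    Only their values on ell_1 matter. *)
Definition lin_functional (f : seqR -> R) : Prop :=
  forall a b x y, in_l1 x -> in_l1 y ->
    f (seq_add (seq_scal a x) (seq_scal b y)) = a * f x + b * f y.

Definition bounded_functional (f : seqR -> R) : Prop :=
  lin_functional f /\
  exists C : R, forall x, in_l1 x -> Rabs (f x) <= C * norm1 x.

Definition dual_norm (f : seqR -> R) : Rbar :=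
  Lub_Rbar (fun r => exists x, in_l1 x /\ norm1 x <= 1 /\ r = Rabs (f x)).

Definition bounded_operator (T : seqR -> seqR) : Prop :=
  (forall x, in_l1 x -> in_l1 (T x)) /\
  (forall a b x y, in_l1 x -> in_l1 y ->
     forall n, T (seq_add (seq_scal a x) (seq_scal b y)) n = a * T x n + b * T y n) /\
  exists C : R, forall x, in_l1 x -> norm1 (T x) <= C * norm1 x.

Definition op_norm (T : seqR -> seqR) : Rbar :=
  Lub_Rbar (fun r => exists x, in_l1 x /\ norm1 x <= 1 /\ r = norm1 (T x)).

Definition op_sub (S T : seqR -> seqR) : seqR -> seqR :=
  fun x n => S x n - T x n.

Definition Pi (x : seqR) (f : seqR -> R) : Prop :=
  in_l1 x /\ norm1 x = 1 /\
  bounded_functional f /\ dual_norm f = Finite 1 /\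
  f x = 1.

Definition num_radius (T : seqR -> seqR) : Rbar :=
  Lub_Rbar (fun r => exists x f, Pi x f /\ r = Rabs (f (T x))).

Definition Lppnu_l1 : Prop :=
  forall (eps : R), 0 < eps ->
  forall (x : seqR) (f : seqR -> R), Pi x f ->
  exists eta : R, 0 < eta /\
    forall T : seqR -> seqR,
      bounded_operator T -> num_radius T = Finite 1 ->
      Rabs (f (T x)) > 1 - eta ->
      exists S : seqR -> seqR,
        bounded_operator S /\ num_radius S = Finite 1 /\
        Rabs (f (S x)) = 1 /\
        Rbar_lt (op_norm (op_sub S T)) (Finite eps).

(* Main.v *)
Require Import Defs.
From Stdlib Require Import Reals.
From Coquelicot Require Import Coquelicot.
From Stdlib Require Import Lra Lia FunctionalExtensionality.
Open Scope R_scope.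

Lemma is_series_lin (u v : nat -> R) lu lv c d :
  is_series u lu -> is_series v lv ->
  is_series (fun n => c * u n + d * v n) (c * lu + d * lv).
Proof.
  intros Hu Hv.
  exact (is_series_plus _ _ _ _ (is_series_scal_l c _ _ Hu) (is_series_scal_l d _ _ Hv)).
Qed.

Lemma is_series_scalR (c : R) (a : nat -> R) l : is_series a l -> is_series (fun n => c * a n) (c * l).
Proof. intros H. exact (is_series_scal_l c a l H). Qed.

Lemma is_series_extR (a b : nat -> R) l : (forall n, a n = b n) -> is_series a l -> is_series b l.
Proof. intros H1 H2. exact (is_series_ext a b l H1 H2). Qed.

Lemma ex_series_lin (u v : nat -> R) c d :
  ex_series u -> ex_series v -> ex_series (fun n => c * u n + d * v n).
Proof.
  intros Hu Hv.
  exact (ex_series_plus _ _ (ex_series_scal_l c _ Hu) (ex_series_scal_l d _ Hv)).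
Qed.

Lemma in_l1_lin (u v : seqR) c d :
  in_l1 u -> in_l1 v -> in_l1 (fun n => c * u n + d * v n).
Proof.
  unfold in_l1; intros Hu Hv.
  apply (@ex_series_le R_AbsRing R_CompleteNormedModule _ (fun n => Rabs c * Rabs (u n) + Rabs d * Rabs (v n))).
  - intros n. change (norm (Rabs (c * u n + d * v n))) with (Rabs (Rabs (c * u n + d * v n))).
    rewrite Rabs_Rabsolu.
    eapply Rle_trans; [apply Rabs_triang|]. rewrite !Rabs_mult; lra.
  - apply ex_series_lin; assumption.
Qed.

Lemma Series_lin (u v : seqR) c d : in_l1 u -> in_l1 v ->
  Series (fun n => c * u n + d * v n) = c * Series u + d * Series v.
Proof.
  intros Hu Hv. apply ex_series_Rabs in Hu. apply ex_series_Rabs in Hv.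
  rewrite Series_plus.
  - rewrite !Series_scal_l. reflexivity.
  - exact (ex_series_scal_l c _ Hu).
  - exact (ex_series_scal_l d _ Hv).
Qed.

Lemma Series_abs (y : seqR) : in_l1 y -> Rabs (Series y) <= norm1 y.
Proof. intros H. apply Series_Rabs. exact H. Qed.

Lemma lub_one (E : R -> Prop) : (forall r, E r -> r <= 1) -> E 1 -> Lub_Rbar E = Finite 1.
Proof.
  intros Hub H1. apply is_lub_Rbar_unique. split.
  - intros r Hr. simpl. apply Hub; exact Hr.
  - intros b Hb. apply Hb. exact H1.
Qed.

Lemma lub_le (E : R -> Prop) r : E r -> Rbar_le (Finite r) (Lub_Rbar E).
Proof. intros H. destruct (Lub_Rbar_correct E) as [Hu _]. apply Hu. exact H. Qed.

Lemma lub_one_le (E : R -> Prop) r : Lub_Rbar E = Finite 1 -> E r -> r <= 1.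
Proof. intros H Hr. pose proof (lub_le E r Hr) as K. rewrite H in K. exact K. Qed.

Definition fS : seqR -> R := fun y => Series y.

Lemma fS_lin : lin_functional fS.
Proof. intros a b x y Hx Hy. unfold fS, seq_add, seq_scal. apply Series_lin; auto. Qed.

Lemma nonneg_l1 (z : seqR) : (forall n, 0 <= z n) -> is_series z 1 ->
  in_l1 z /\ norm1 z = 1.
Proof.
  intros Hp Hs. split.
  - unfold in_l1. exists 1. eapply is_series_extR; [|exact Hs].
    intros n; rewrite Rabs_pos_eq; auto.
  - unfold norm1. rewrite (Series_ext _ z). apply is_series_unique; exact Hs.
    intros n; rewrite Rabs_pos_eq; auto.
Qed.

Lemma pi_of (z : seqR) : (forall n, 0 <= z n) -> is_series z 1 -> Pi z fS.
Proof.
  intros Hp Hs. destruct (nonneg_l1 z Hp Hs) as [Hl Hn].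
  assert (Hf : fS z = 1) by (unfold fS; apply is_series_unique; exact Hs).
  split; [exact Hl|]. split; [exact Hn|]. split; [|split; [|exact Hf]].
  - split; [exact fS_lin|]. exists 1. intros x Hx. rewrite Rmult_1_l. apply Series_abs; exact Hx.
  - unfold dual_norm. apply lub_one.
    + intros r [x [Hx [Hnx ->]]]. eapply Rle_trans; [apply Series_abs; exact Hx| exact Hnx].
    + exists z. split; [exact Hl|]. split; [lra|]. rewrite Hf, Rabs_R1. reflexivity.
Qed.

Lemma pi_bound (z : seqR) g w : Pi z g -> in_l1 w -> norm1 w <= 1 -> Rabs (g w) <= 1.
Proof.
  intros [_ [_ [_ [Hd _]]]] Hw Hn. unfold dual_norm in Hd.
  apply (lub_one_le _ _ Hd). exists w. auto.
Qed.

Definition xg : seqR := fun n => (1/2) ^ (S n).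

Lemma xg_series : is_series xg 1.
Proof.
  assert (H := is_series_geom (1/2)).
  assert (H1 : Rabs (1/2) < 1) by (rewrite Rabs_pos_eq; lra).
  specialize (H H1).
  apply (is_series_scalR (1/2)) in H.
  replace 1 with (1/2 * / (1 - 1/2)) by field.
  eapply is_series_extR; [|exact H]. intros n. reflexivity.
Qed.

Lemma xg_pos n : 0 < xg n.
Proof. unfold xg. apply pow_lt. lra. Qed.

Definition ek (k : nat) : seqR := fun n => if Nat.eqb n k then 1 else 0.

Lemma sum_n_zero (a : nat -> R) m : (forall i, (i <= m)%nat -> a i = 0) -> sum_n a m = 0.
Proof.
  induction m; intros H.
  - rewrite sum_O. apply H. lia.
  - rewrite sum_Sn. rewrite IHm by (intros; apply H; lia). rewrite H by lia.
    change (0 + 0 = 0). ring.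
Qed.

Lemma zero_series : is_series (fun _ : nat => 0) 0.
Proof.
  assert (H := is_series_scalR 0 _ _ xg_series).
  rewrite Rmult_0_l in H.
  eapply is_series_extR; [|exact H]. intros n. apply Rmult_0_l.
Qed.

Lemma ek_series k : is_series (ek k) 1.
Proof.
  apply (is_series_decr_n _ (S k)); [lia|].
  simpl pred.
  assert (Hs : sum_n (ek k) k = 1).
  { destruct k.
    - rewrite sum_O. reflexivity.
    - rewrite sum_Sn. rewrite sum_n_zero.
      + unfold ek. rewrite Nat.eqb_refl. change (0 + 1 = 1). ring.
      + intros i Hi. unfold ek. destruct (Nat.eqb_spec i (S k)); [lia|reflexivity]. }
  match goal with |- is_series _ ?l => replace l with 0 end.
  2:{ change (0 = 1 + - sum_n (ek k) k). rewrite Hs. ring. }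
  eapply is_series_extR; [|exact zero_series]. intros n. unfold ek.
  destruct (Nat.eqb_spec (S k + n) k); [lia|reflexivity].
Qed.

Lemma ek_pos k n : 0 <= ek k n.
Proof. unfold ek. destruct (Nat.eqb n k); lra. Qed.

Definition yk (k : nat) : seqR := fun n => (xg n - xg k * ek k n) / (1 - xg k).

Lemma xg_lt1 k : xg k < 1.
Proof. unfold xg. simpl. assert (H := pow_lt_1_compat (1/2) k). 
  destruct k. simpl; lra.
  destruct H as [H1 H2]; [lra|lia|]. nra. Qed.

Lemma yk_series k : is_series (yk k) 1.
Proof.
  assert (H := is_series_lin _ _ _ _ (/(1 - xg k)) (- xg k / (1 - xg k)) xg_series (ek_series k)).
  assert (Hlt := xg_lt1 k).
  assert (E : / (1 - xg k) * 1 + - xg k / (1 - xg k) * 1 = 1) by (field; lra).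
  rewrite E in H.
  eapply is_series_extR; [|exact H]. intros n. unfold yk. field. lra.
Qed.

Lemma yk_pos k n : 0 <= yk k n.
Proof.
  unfold yk. assert (Hlt := xg_lt1 k). apply Rmult_le_pos; [|apply Rlt_le, Rinv_0_lt_compat; lra].
  unfold ek. destruct (Nat.eqb_spec n k).
  - subst. lra.
  - pose proof (xg_pos n). lra.
Qed.

Lemma xg_decomp k : xg = seq_add (seq_scal (xg k) (ek k)) (seq_scal (1 - xg k) (yk k)).
Proof.
  apply functional_extensionality. intros n. unfold seq_add, seq_scal, yk.
  assert (Hlt := xg_lt1 k). field. lra.
Qed.

Lemma column (S : seqR -> seqR) k : bounded_operator S -> num_radius S = Finite 1 ->
  Rabs (fS (S xg)) = 1 -> fS (S (ek k)) = fS (S xg).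
Proof.
  intros [HS1 [HS2 _]] Hv Habs.
  assert (Hb : forall z, (forall n, 0 <= z n) -> is_series z 1 -> Rabs (fS (S z)) <= 1).
  { intros z Hp Hs. apply (lub_one_le _ _ Hv). exists z, fS. split; [apply pi_of; auto|reflexivity]. }
  pose proof (Hb _ (ek_pos k) (ek_series k)) as Hu.
  pose proof (Hb _ (yk_pos k) (yk_series k)) as Hw.
  assert (Hle : in_l1 (ek k)) by (apply (nonneg_l1 _ (ek_pos k) (ek_series k))).
  assert (Hly : in_l1 (yk k)) by (apply (nonneg_l1 _ (yk_pos k) (yk_series k))).
  assert (Hdec : fS (S xg) = xg k * fS (S (ek k)) + (1 - xg k) * fS (S (yk k))).
  { rewrite (xg_decomp k) at 1. unfold fS.
    rewrite (Series_ext _ (fun n => xg k * S (ek k) n + (1 - xg k) * S (yk k) n)).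
    - apply Series_lin; auto.
    - intros n. apply HS2; auto. }
  assert (Ha := xg_pos k). assert (Ha1 := xg_lt1 k).
  set (u := fS (S (ek k))) in *. set (w := fS (S (yk k))) in *.
  set (s := fS (S xg)) in *.
  apply Rabs_le_between in Hu. apply Rabs_le_between in Hw.
  destruct (Rcase_abs s) as [Hn|Hn].
  - rewrite Rabs_left in Habs by lra. assert (s = -1) by lra. nra.
  - rewrite Rabs_pos_eq in Habs by lra. nra.
Qed.

Definition Top (N : nat) : seqR -> seqR := fun y n => if Nat.ltb n N then y n else - y n.

Lemma Top_abs N y n : Rabs (Top N y n) = Rabs (y n).
Proof. unfold Top. destruct (Nat.ltb n N); [reflexivity| apply Rabs_Ropp]. Qed.

Lemma Top_l1 N y : in_l1 y -> in_l1 (Top N y) /\ norm1 (Top N y) = norm1 y.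
Proof.
  intros H. split.
  - unfold in_l1. destruct H as [l Hl]. exists l. eapply is_series_extR; [|exact Hl].
    intros n; rewrite Top_abs; reflexivity.
  - unfold norm1. apply Series_ext. intros n; apply Top_abs.
Qed.

Lemma Top_bounded N : bounded_operator (Top N).
Proof.
  split; [intros x Hx; apply Top_l1; exact Hx|]. split.
  - intros a b x y Hx Hy n. unfold Top, seq_add, seq_scal. destruct (Nat.ltb n N); ring.
  - exists 1. intros x Hx. rewrite (proj2 (Top_l1 N x Hx)). lra.
Qed.

Lemma Top_e0 N : (1 <= N)%nat -> Top N (ek 0) = ek 0.
Proof.
  intros HN. apply functional_extensionality. intros n. unfold Top, ek.
  destruct (Nat.ltb_spec n N); [reflexivity|]. destruct (Nat.eqb_spec n 0); [lia|]. ring.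
Qed.

Lemma Top_eN N : Top N (ek N) = fun n => - ek N n.
Proof.
  apply functional_extensionality. intros n. unfold Top, ek.
  destruct (Nat.ltb_spec n N); [|reflexivity]. destruct (Nat.eqb_spec n N); [lia|]. ring.
Qed.

Lemma Top_radius N : (1 <= N)%nat -> num_radius (Top N) = Finite 1.
Proof.
  intros HN. unfold num_radius. apply lub_one.
  - intros r [x [g [Hp ->]]]. pose proof Hp as [Hx [Hn _]].
    destruct (Top_l1 N x Hx) as [H1 H2].
    apply (pi_bound x g); auto. lra.
  - exists (ek 0), fS. split; [apply pi_of; [apply ek_pos|apply ek_series]|].
    rewrite Top_e0 by exact HN. unfold fS. rewrite (is_series_unique _ _ (ek_series 0)).
    rewrite Rabs_R1. reflexivity.
Qed.

Lemma Top_x N : (1 <= N)%nat -> is_series (Top N xg) (1 - 2 * (1/2)^N).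
Proof.
  intros HN.
  set (z := fun n => if Nat.ltb n N then 0 else xg n).
  assert (Hz : is_series z ((1/2)^N)).
  { apply (is_series_decr_n _ N); [lia|].
    assert (Hs : sum_n z (pred N) = 0).
    { apply sum_n_zero. intros i Hi. unfold z. destruct (Nat.ltb_spec i N); [reflexivity|lia]. }
    match goal with |- is_series _ ?l => replace l with ((1/2)^N * 1) end.
    2:{ change ((1/2)^N * 1 = (1/2)^N + - sum_n z (pred N)). rewrite Hs. ring. }
    eapply is_series_extR; [|apply is_series_scalR; exact xg_series].
    intros n. unfold z. destruct (Nat.ltb_spec (N + n) N); [lia|].
    unfold xg. rewrite <- Nat.add_succ_r, pow_add. reflexivity. }
  assert (H := is_series_lin _ _ _ _ 1 (-2) xg_series Hz).
  replace (1 - 2 * (1/2)^N) with (1 * 1 + -2 * (1/2)^N) by ring.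
  eapply is_series_extR; [|exact H]. intros n. unfold Top, z.
  destruct (Nat.ltb n N); ring.
Qed.

Theorem mainTheorem12 : ~ Lppnu_l1.
Proof.
  intros H.
  assert (Hpx : Pi xg fS) by (apply pi_of; [intros n; apply Rlt_le, xg_pos|exact xg_series]).
  destruct (H 1 Rlt_0_1 xg fS Hpx) as [eta [Heta HT]].
  destruct (pow_lt_1_zero (1/2)) with (y := eta / 2) as [N0 HN0].
  { rewrite Rabs_pos_eq; lra. } { lra. }
  set (N := S N0).
  assert (HN : (1 <= N)%nat) by (unfold N; lia).
  assert (Hq : (1/2)^N < eta/2).
  { specialize (HN0 N ltac:(unfold N; lia)). rewrite Rabs_pos_eq in HN0; [exact HN0|].
    apply pow_le; lra. }
  assert (Hq0 : 0 <= (1/2)^N < 1) by (apply pow_lt_1_compat; [lra|lia]).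
  assert (Hq1 : (1/2)^N <= 1/2).
  { unfold N. change ((1/2)^(S N0)) with (1/2 * (1/2)^N0). assert (0 <= (1/2)^N0 <= 1) by (split; [apply pow_le; lra| apply (Rle_trans _ (1^N0)); [apply pow_incr; lra | rewrite pow1; lra]]). nra. }
  destruct (HT (Top N) (Top_bounded N) (Top_radius N HN)) as [S [HSb [HSv [HSx Hd]]]].
  { unfold fS. rewrite (is_series_unique _ _ (Top_x N HN)). rewrite Rabs_pos_eq; lra. }
  change (Rabs (fS (S xg)) = 1) in HSx.
  pose proof HSb as [HS1 [HS2 _]].
  assert (Hop : forall k, Rbar_le (Finite (norm1 (op_sub S (Top N) (ek k)))) (op_norm (op_sub S (Top N)))).
  { intros k. apply lub_le. exists (ek k). split; [apply (nonneg_l1 _ (ek_pos k) (ek_series k))|].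
    split; [rewrite (proj2 (nonneg_l1 _ (ek_pos k) (ek_series k))); lra|reflexivity]. }
  assert (Hkey : forall k, in_l1 (op_sub S (Top N) (ek k)) -> 2 <= Rabs (fS (op_sub S (Top N) (ek k))) -> False).
  { intros k Hl Hge. apply (Rbar_lt_not_le _ _ Hd).
    eapply Rbar_le_trans; [|apply (Hop k)]. simpl.
    eapply Rle_trans; [|apply Series_abs; exact Hl]. unfold fS in Hge. lra. }
  assert (Hek : forall k, in_l1 (ek k)) by (intros k; apply (nonneg_l1 _ (ek_pos k) (ek_series k))).
  assert (Hfe : forall k, fS (ek k) = 1) by (intros k; apply is_series_unique, ek_series).
  destruct (Rcase_abs (fS (S xg))) as [Hneg|Hpos].
  - rewrite Rabs_left in HSx by lra.
    assert (Hc := column S 0 HSb HSv ltac:(rewrite Rabs_left; lra)).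
    assert (Hw : op_sub S (Top N) (ek 0) = fun n => 1 * S (ek 0) n + (-1) * ek 0 n).
    { unfold op_sub. rewrite Top_e0 by exact HN. apply functional_extensionality; intros n; ring. }
    apply (Hkey 0%nat); rewrite Hw.
    + apply in_l1_lin; auto.
    + unfold fS at 1. rewrite Series_lin by auto. change (Series (S (ek 0))) with (fS (S (ek 0))).
      change (Series (ek 0)) with (fS (ek 0)).
      rewrite Hc, Hfe. rewrite Rabs_left by lra. lra.
  - rewrite Rabs_pos_eq in HSx by lra.
    assert (Hc := column S N HSb HSv ltac:(rewrite Rabs_pos_eq; lra)).
    assert (Hw : op_sub S (Top N) (ek N) = fun n => 1 * S (ek N) n + 1 * ek N n).
    { unfold op_sub. rewrite Top_eN. apply functional_extensionality; intros n; ring. }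
    apply (Hkey N); rewrite Hw.
    + apply in_l1_lin; auto.
    + unfold fS at 1. rewrite Series_lin by auto. change (Series (S (ek N))) with (fS (S (ek N))).
      change (Series (ek N)) with (fS (ek N)).
      rewrite Hc, Hfe. rewrite Rabs_pos_eq by lra. lra.
Qed.
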